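(* Let $L$ be a finite power associative loop that is left power alternative and has the left inverse property. Then $L$ has the strong monogenic Lagrange property: for every subloop $H$ of $L$ and every $x\in H$, the order of the subloop $\langle x\rangle$ generated by $x$ divides $|H|$.
   Context: A loop is power associative if each subloop generated by one element is a group. It is left power alternative if $L_{x^n}=L_x^n$ for all $x$ and $n>0$, where $L_a$ is the left translation $y\mapsto ay$. It has the left inverse property if $x^{-1}(xy)=y$ for all $x,y$, where $x^{-1}$ is the element with $x^{-1}x=e$. *)

(* Defs.v *)
From mathcomp Require Import all_boot.
Set Implicit Arguments. Unset Strict Implicit. Unset Printing Implicit Defensive.

Section Loops.
Variables (T : finType) (mul : T -> T -> T) (e : T).

Definition is_loop : Prop :=
  (forall x, mul e x = x /\ mul x e = x) /\
  (forall a b, exists! x, mul a x = b) /\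
  (forall a b, exists! y, mul y a = b).

Definition subloop (H : {set T}) : bool :=
  [&& e \in H,
      [forall a, forall b, (a \in H) ==> (b \in H) ==> (mul a b \in H)],
      [forall a, forall b, forall x,
          [&& a \in H, b \in H & mul a x == b] ==> (x \in H)] &
      [forall a, forall b, forall y,
          [&& a \in H, b \in H & mul y a == b] ==> (y \in H)]].

Definition gen (x : T) : {set T} :=
  \bigcap_(H : {set T} | subloop H && (x \in H)) H.

Definition power_assoc : Prop :=
  forall x a b c, a \in gen x -> b \in gen x -> c \in gen x ->
    mul (mul a b) c = mul a (mul b c).

(* x^n, defined by x^0 = e, x^(n+1) = x * x^n (unambiguous under
   power associativity) *)
Definition lpow (x : T) (n : nat) : T := iter n (mul x) e.

Definition left_power_alternative : Prop :=
  forall x n y, 0 < n -> mul (lpow x n) y = iter n (mul x) y.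

Definition left_inverse_property : Prop :=
  forall x xi y, mul xi x = e -> mul xi (mul x y) = y.

End Loops.

(* Main.v *)
Require Import Defs.
From mathcomp Require Import all_boot.

Theorem lemma4p6 (T : finType) (mul : T -> T -> T) (e : T) :
  is_loop mul e ->
  power_assoc mul e ->
  left_power_alternative mul e ->
  left_inverse_property mul e ->
  forall (H : {set T}), subloop mul e H ->
  forall x, x \in H -> (#|gen mul e x| %| #|H|)%N.
Proof.
move=> [idl [lsol rsol]] _ lpa _ H HH x xH.
pose f := mul x.
have idL y : mul e y = y by case: (idl y).
have idR y : mul y e = y by case: (idl y).
have injf : injective f.
  move=> a b eab; case: (lsol x (f a)) => z [_ uz].
  by rewrite -(uz a erefl) (uz b (esym eab)).
have key k y : iter k f y = mul (iter k f e) y.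
  case: k => [|k]; first by rewrite /= idL.
  symmetry; exact: (lpa x k.+1 y isT).
have runiq a y : mul a y = y -> a = e.
  move=> h; case: (rsol y y) => z [_ uz].
  by rewrite -(uz a h) (uz e (idL y)).
have Peq k y : (iter k f y == y) = (iter k f e == e).
  rewrite key; apply/eqP/eqP => [/runiq // | ->]; exact: idL.
have ordE y : order f y = order f e.
  have gen_le u v : (forall k, (iter k f u == u) = (iter k f v == v)) ->
      order f u <= order f v.
    move=> P; rewrite leqNgt; apply/negP => lt.
    have h : iter (order f v) f u = u.
      by apply/eqP; rewrite P; apply/eqP; exact: iter_order.
    have := findex_iter lt; rewrite h findex0 => h0.
    by move: (order_gt0 f v); rewrite -h0.
  by apply/eqP; rewrite eqn_leq !gen_le // => k; rewrite Peq.
move: HH => /and4P[eH /forallP mulH /forallP ldivH _].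
have Hcl : fclosed f H.
  move=> a b /eqP <-; apply/idP/idP => ha.
    by have := forallP (mulH x) a; rewrite xH ha.
  have := forallP (forallP (ldivH x) (f a)) a.
  by rewrite xH ha eqxx.
have dvd : order f e %| #|H|.
  have sub : H \subset order_set f (order f e).
    by apply/subsetP => y _; rewrite inE ordE.
  by rewrite -(fcard_order_set injf sub Hcl) dvdn_mull.
suff -> : gen mul e x = [set y | fconnect f e y].
  by rewrite cardsE.
set S := [set y | fconnect f e y].
have Siter k : iter k f e \in S by rewrite inE fconnect_iter.
have Sex y : y \in S -> exists k, y = iter k f e.
  by rewrite inE => /iter_findex <-; eexists.
pose d := order f e.
have itd i j : iter (d * i + j) f e = iter j f e.
  elim: i => [|i IH]; first by rewrite muln0.
  by rewrite mulnS -addnA iterD IH -iterD addnC iterD (iter_order injf).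
have Sclosed : forall z, (z \in S) = (f z \in S).
  by move=> z; rewrite !inE (same_fconnect1_r injf).
have dpos : 0 < d by exact: order_gt0.
apply/eqP; rewrite eqEsubset; apply/andP; split.
  apply: bigcap_inf; apply/andP; split; last by rewrite -[x]idR (Siter 1).
  apply/and4P; split.
  - exact: (Siter 0).
  - apply/forallP => a; apply/forallP => b; apply/implyP => /Sex[i ->].
    apply/implyP => /Sex[j ->]; by rewrite -key -iterD.
  - apply/forallP => a; apply/forallP => b; apply/forallP => z.
    apply/implyP => /and3P[/Sex[i ->] bS /eqP hb].
    move: bS; rewrite -hb -key; clear hb.
    elim: i z => [//|i IH] z; by rewrite iterSr => /IH; rewrite -Sclosed.
  - apply/forallP => a; apply/forallP => b; apply/forallP => y.
    apply/implyP => /and3P[/Sex[i ->] /Sex[j ->] /eqP hb].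
    have hi : i <= d * i by rewrite leq_pmull.
    case: (rsol (iter i f e) (iter j f e)) => z [_ uz].
    rewrite -(uz y hb) (uz (iter (d * i - i + j) f e)) //.
    by rewrite -key -iterD addnAC subnK // itd.
apply/subsetP => y /Sex[k ->]; apply/bigcapP => K /andP[sK xK].
move: sK => /and4P[eK /forallP mK _ _].
elim: k => [//|k IH] /=.
by have := forallP (mK x) (iter k f e); rewrite xK IH.
Qed.
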